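(* Let $M\ge 2$, let $k\in\{1,\dots,M\}$, and let $\mathbf V_1,\ldots,\mathbf V_M\in\mathbb C^{M\times M}$ be Hermitian positive definite matrices. For $\mathbf u\in\mathbb C^M$ and $\mathbf q\in\mathbb C^{M-1}$ define $$\mathbf T_k(\mathbf u,\mathbf q)=\mathbf I+\mathbf e_k(\mathbf u-\mathbf e_k)^{\mathsf H}+\bar{\mathbf E}_k\mathbf q^{*}\mathbf e_k^{\top},$$ $$\ell_2(\mathbf u,\mathbf q)=\sum_{m\neq k}(\mathbf e_m+q_m\mathbf e_k)^{\mathsf H}\mathbf V_m(\mathbf e_m+q_m\mathbf e_k)+\mathbf u^{\mathsf H}\mathbf V_k\mathbf u-2\log\left|\det\mathbf T_k(\mathbf u,\mathbf q)\right|,$$ and consider the problem $\min_{\mathbf u\in\mathbb C^M,\ \mathbf q\in\mathbb C^{M-1}}\ell_2(\mathbf u,\mathbf q)$. Then: (1) For a given $\mathbf q$, the optimal vector $\mathbf u^\star(\mathbf q)$ is $$\mathbf u^\star(\mathbf q)=\frac{\mathbf V_k^{-1}\tilde{\mathbf q}_k}{\sqrt{\tilde{\mathbf q}_k^{\mathsf H}\mathbf V_k^{-1}\tilde{\mathbf q}_k}}\,e^{j\theta},\qquad \tilde{\mathbf q}_k=\mathbf e_k-\bar{\mathbf E}_k\mathbf q^{*},$$ where $\theta\in[0,2\pi]$ is an arbitrary phase. (2) The optimal $\mathbf q^\star$ is the solution of $$\min_{\mathbf q\in\mathbb C^{M-1}}\ (\mathbf q+\mathbf A^{-1}\mathbf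 b)^{\mathsf H}\mathbf A(\mathbf q+\mathbf A^{-1}\mathbf b)-\log\!\left((\mathbf q-\mathbf C^{-1}\mathbf g)^{\mathsf H}\mathbf C(\mathbf q-\mathbf C^{-1}\mathbf g)+z\right),$$ where $\mathbf A=\operatorname{diag}(\mathbf e_k^\top\mathbf V_m\mathbf e_k)_{m\neq k}$, $\mathbf b=(\mathbf e_k^\top\mathbf V_m\mathbf e_m)_{m\neq k}\in\mathbb C^{M-1}$, $\mathbf C=\bar{\mathbf E}_k^\top(\mathbf V_k^{-1})^{*}\bar{\mathbf E}_k$, $\mathbf g=\bar{\mathbf E}_k^\top(\mathbf V_k^{-1})^{*}\mathbf e_k$, and $z=\mathbf e_k^\top(\mathbf V_k^{-1})^{*}\mathbf e_k-\mathbf g^{\mathsf H}\mathbf C^{-1}\mathbf g$.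
   Context: $\mathbf e_1,\dots,\mathbf e_M$ are the canonical basis vectors of $\mathbb C^M$, $\mathbf I$ is the $M\times M$ identity, and $\bar{\mathbf E}_k=[\mathbf e_1\ \cdots\ \mathbf e_{k-1}\ \mathbf e_{k+1}\ \cdots\ \mathbf e_M]$ is the $M\times(M-1)$ matrix of all canonical basis vectors except the $k$-th. The entries of $\mathbf q\in\mathbb C^{M-1}$ are indexed as $q_m$, $m\in\{1,\dots,M\}\setminus\{k\}$, in increasing order of $m$; vectors and diagonal matrices indexed by $m\neq k$ are ordered likewise. $\mathbf x^{*}$ denotes entrywise complex conjugation, $^{\mathsf H}$ conjugate transpose, $^\top$ transpose, and $j=\sqrt{-1}$. *)

(* Defs.v *)
From HB Require Import structures.
From mathcomp Require Import all_boot all_order all_algebra.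
From mathcomp Require Import complex.
From mathcomp Require Import all_classical all_reals all_analysis.

Set Implicit Arguments.
Unset Strict Implicit.
Unset Printing Implicit Defensive.

Import Order.TTheory GRing.Theory Num.Theory.
Local Open Scope ring_scope.

Section Defs.
Variable R : realType.
Local Notation C := R[i].

Definition ct (m p : nat) (A : 'M[C]_(m, p)) : 'M[C]_(p, m) := (map_mx Num.conj A)^T.
Definition cj (m p : nat) (A : 'M[C]_(m, p)) : 'M[C]_(m, p) := map_mx Num.conj A.

Definition hermitian (m : nat) (V : 'M[C]_m) : Prop := ct V = V.
Definition posdef (m : nat) (V : 'M[C]_m) : Prop :=
  hermitian V /\ forall x : 'cV[C]_m, x != 0 -> 0 < (ct x *m V *m x) 0 0.

Variable n : nat.  (* M = n.+1 *)

Definition e (i : 'I_n.+1) : 'cV[C]_n.+1 := delta_mx i 0.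
(* \bar E_k : all canonical basis vectors but the k-th, in increasing order *)
Definition Ebar (k : 'I_n.+1) : 'M[C]_(n.+1, n) :=
  \matrix_(i, j) (i == lift k j)%:R.

Definition Tk (k : 'I_n.+1) (u : 'cV[C]_n.+1) (q : 'cV[C]_n) : 'M[C]_n.+1 :=
  1%:M + e k *m ct (u - e k) + Ebar k *m cj q *m (e k)^T.

(* q_m (m <> k) is the entry  q (j) with m = lift k j *)
Definition ell2 (V : 'I_n.+1 -> 'M[C]_n.+1) (k : 'I_n.+1)
    (u : 'cV[C]_n.+1) (q : 'cV[C]_n) : R :=
  complex.Re ((\sum_(j < n)
         (ct (e (lift k j) + q j 0 *: e k) *m V (lift k j)
            *m (e (lift k j) + q j 0 *: e k)) 0 0)
      + (ct u *m V k *m u) 0 0)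
  - 2 * ln (complex.Re `|\det (Tk k u q)|).

(* the objective is +oo (log 0) when det T_k = 0: feasible domain *)
Definition feasible (k : 'I_n.+1) (u : 'cV[C]_n.+1) (q : 'cV[C]_n) : Prop :=
  \det (Tk k u q) != 0.

Definition qtilde (k : 'I_n.+1) (q : 'cV[C]_n) : 'cV[C]_n.+1 := e k - Ebar k *m cj q.

Definition expj (t : R) : C := Complex (cos t) (sin t).

Definition ustar (V : 'I_n.+1 -> 'M[C]_n.+1) (k : 'I_n.+1) (q : 'cV[C]_n) (t : R)
  : 'cV[C]_n.+1 :=
  ((sqrtC ((ct (qtilde k q) *m invmx (V k) *m qtilde k q) 0 0))^-1 * expj t)
    *: (invmx (V k) *m qtilde k q).

Definition Amx (V : 'I_n.+1 -> 'M[C]_n.+1) (k : 'I_n.+1) : 'M[C]_n :=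
  diag_mx (\row_j ((e k)^T *m V (lift k j) *m e k) 0 0).
Definition bvec (V : 'I_n.+1 -> 'M[C]_n.+1) (k : 'I_n.+1) : 'cV[C]_n :=
  \col_j ((e k)^T *m V (lift k j) *m e (lift k j)) 0 0.
Definition Cmx (V : 'I_n.+1 -> 'M[C]_n.+1) (k : 'I_n.+1) : 'M[C]_n :=
  (Ebar k)^T *m cj (invmx (V k)) *m Ebar k.
Definition gvec (V : 'I_n.+1 -> 'M[C]_n.+1) (k : 'I_n.+1) : 'cV[C]_n :=
  (Ebar k)^T *m cj (invmx (V k)) *m e k.
Definition zsc (V : 'I_n.+1 -> 'M[C]_n.+1) (k : 'I_n.+1) : C :=
  ((e k)^T *m cj (invmx (V k)) *m e k) 0 0
  - (ct (gvec V k) *m invmx (Cmx V k) *m gvec V k) 0 0.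

Definition fobj (V : 'I_n.+1 -> 'M[C]_n.+1) (k : 'I_n.+1) (q : 'cV[C]_n) : R :=
  let A := Amx V k in let b := bvec V k in
  let Cm := Cmx V k in let g := gvec V k in
  complex.Re ((ct (q + invmx A *m b) *m A *m (q + invmx A *m b)) 0 0)
  - ln (complex.Re ((ct (q - invmx Cm *m g) *m Cm *m (q - invmx Cm *m g)) 0 0 + zsc V k)).

End Defs.

(* Main.v *)
Require Import Defs.
From HB Require Import structures.
From mathcomp Require Import all_boot all_order all_algebra.
From mathcomp Require Import complex.
From mathcomp Require Import all_classical all_reals all_analysis.
From mathcomp Require Import ring lra.

Import Order.TTheory GRing.Theory Num.Theory.
Local Open Scope ring_scope.
Set Implicit Arguments.
Unset Strict Implicit.
Unset Printing Implicit Defensive.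
Section Basics.
Variable R : realType.
Local Notation C := R[i].

Lemma sylvester m p (A : 'M[C]_(m, p)) (B : 'M[C]_(p, m)) :
  \det (1%:M + A *m B) = \det (1%:M + B *m A).
Proof.
have h1 : block_mx (1%:M : 'M[C]_m) (-A) B (1%:M : 'M[C]_p) =
   block_mx 1%:M 0 B 1%:M *m block_mx 1%:M (-A) 0 (1%:M + B *m A).
  by rewrite mulmx_block !mul1mx !mul0mx !mulmx1 !addr0 mulmxN addrCA addNr addr0.
have h2 : block_mx (1%:M : 'M[C]_m) (-A) B (1%:M : 'M[C]_p) =
   block_mx (1%:M + A *m B) (-A) 0 1%:M *m block_mx 1%:M 0 B 1%:M.
  rewrite mulmx_block !mul1mx !mul0mx !mulmx1 ?addr0 ?add0r mulNmx mulmx0 add0r.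
  by rewrite addrK.
have := congr1 determinant h1; rewrite h2 !det_mulmx !det_lblock !det_ublock.
by rewrite !det1 !mul1r !mulr1 => ->.
Qed.

Lemma ct_mul m p r (A : 'M[C]_(m, p)) (B : 'M[C]_(p, r)) : ct (A *m B) = ct B *m ct A.
Proof. by rewrite /ct map_mxM trmx_mul. Qed.
Lemma ct_add m p (A B : 'M[C]_(m, p)) : ct (A + B) = ct A + ct B.
Proof. by rewrite /ct map_mxD linearD. Qed.
Lemma ct_opp m p (A : 'M[C]_(m, p)) : ct (- A) = - ct A.
Proof. by apply/matrixP=> i j; rewrite !mxE rmorphN. Qed.
Lemma ct_sub m p (A B : 'M[C]_(m, p)) : ct (A - B) = ct A - ct B.
Proof. by rewrite ct_add ct_opp. Qed.
Lemma ct_scale m p c (A : 'M[C]_(m, p)) : ct (c *: A) = Num.conj c *: ct A.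
Proof. by apply/matrixP=> i j; rewrite !mxE rmorphM. Qed.
Lemma ctK m p (A : 'M[C]_(m, p)) : ct (ct A) = A.
Proof. by apply/matrixP=> i j; rewrite !mxE conjCK. Qed.
Lemma cj_mul m p r (A : 'M[C]_(m, p)) (B : 'M[C]_(p, r)) : cj (A *m B) = cj A *m cj B.
Proof. by rewrite /cj map_mxM. Qed.
Lemma cjK m p (A : 'M[C]_(m, p)) : cj (cj A) = A.
Proof. by apply/matrixP=> i j; rewrite !mxE conjCK. Qed.
Lemma ct_cj m p (A : 'M[C]_(m, p)) : ct (cj A) = A^T.
Proof. by apply/matrixP=> i j; rewrite !mxE conjCK. Qed.
Lemma ct_tr m p (A : 'M[C]_(m, p)) : ct (A^T) = cj A.
Proof. by apply/matrixP=> i j; rewrite !mxE. Qed.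
Lemma ct_entry (A : 'M[C]_1) : ct A 0 0 = Num.conj (A 0 0).
Proof. by rewrite !mxE. Qed.

Variable n : nat.
Local Notation e := (@e R n).
Local Notation Ebar := (@Ebar R n).

Lemma ct_e (i : 'I_n.+1) : ct (e i) = (e i)^T.
Proof. by apply/matrixP=> a b; rewrite !mxE; case: (_ && _); rewrite ?conjC0 ?conjC1. Qed.
Lemma cj_e (i : 'I_n.+1) : cj (e i) = e i.
Proof. by apply/matrixP=> a b; rewrite !mxE; case: (_ && _); rewrite ?conjC0 ?conjC1. Qed.
Lemma ct_Ebar k : ct (Ebar k) = (Ebar k)^T.
Proof. by apply/matrixP=> a b; rewrite !mxE; case: (_ == _); rewrite ?conjC0 ?conjC1. Qed.
Lemma cj_Ebar k : cj (Ebar k) = Ebar k.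
Proof. by apply/matrixP=> a b; rewrite !mxE; case: (_ == _); rewrite ?conjC0 ?conjC1. Qed.
Lemma eTe (i : 'I_n.+1) : (e i)^T *m e i = 1%:M.
Proof. by rewrite /Defs.e trmx_delta mul_delta_mx; apply/matrixP=> a b; rewrite !ord1 !mxE. Qed.
Lemma eTEbar k : (e k)^T *m Ebar k = 0.
Proof.
apply/matrixP=> a b; rewrite !mxE big1 // => j _.
rewrite !mxE; case: (j =P k) => [->|_]; last by rewrite mul0r.
by rewrite eq_sym (negbTE (neq_lift k b)) mulr0.
Qed.
Lemma EbarTe k : (Ebar k)^T *m e k = 0.
Proof. by rewrite -(trmxK (e k)) -trmx_mul eTEbar trmx0. Qed.
Lemma EbarTEbar k : (Ebar k)^T *m Ebar k = 1%:M.
Proof.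
apply/matrixP=> a b; rewrite !mxE (bigD1 (lift k a)) //= big1 => [|j hj].
  by rewrite !mxE eqxx mul1r addr0 (inj_eq (@lift_inj _ k)).
by rewrite !mxE (negbTE hj) mul0r.
Qed.

Lemma quad_e (M : 'M[C]_n.+1) i j : (ct (e i) *m M *m e j) 0 0 = M i j.
Proof. by rewrite ct_e /Defs.e trmx_delta -rowE -colE !mxE. Qed.

Lemma det_Tk (k : 'I_n.+1) (u : 'cV[C]_n.+1) (q : 'cV[C]_n) : \det (Tk k u q) = (ct u *m qtilde k q) 0 0.
Proof.
pose L := row_mx (e k) (Ebar k *m cj q).
pose Rm := col_mx (ct (u - e k)) ((e k)^T).
have -> : Tk k u q = 1%:M + L *m Rm by rewrite mul_row_col /Tk addrA.
rewrite sylvester mul_col_row (scalar_mx_block 1 1 1) add_block_mx.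
rewrite eTe [(e k)^T *m (_ *m _)]mulmxA eTEbar mul0mx addr0 !add0r.
set X := (_ + _ *m e k); set Y := _ *m (Ebar k *m cj q).
have -> : block_mx X Y 1%:M 1%:M = block_mx 1%:M Y 0 1%:M *m block_mx (X - Y) 0 1%:M 1%:M.
  rewrite mulmx_block !mul1mx !mul0mx !mulmx1 ?mulmx0 ?addr0 ?add0r.
  by rewrite subrK.
rewrite det_mulmx det_ublock det_lblock !det1 !mul1r mulr1 det_mx11.
rewrite /X /Y /qtilde -addrA -mulmxBr ct_sub mulmxBl ct_e.
rewrite (mulmxBr ((e k)^T)) [(e k)^T *m (_ *m _)]mulmxA eTEbar mul0mx subr0 eTe.
by rewrite addrC subrK.
Qed.

End Basics.
Section PD.
Variable R : realType.
Local Notation C := R[i].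

Lemma posdef_unit m (P : 'M[C]_m) : posdef P -> P \in unitmx.
Proof.
move=> [_ hP]; rewrite -unitmx_tr -row_free_unit -kermx_eq0.
move: (kermx P^T) (mulmx_ker P^T) => K hK.
apply/negPn/negP => /matrix0Pn [i [j hij]].
pose x := (row i K)^T.
have hx : x != 0.
  apply/negP=> /eqP /matrixP /(_ j 0); rewrite !mxE => h; by rewrite h eqxx in hij.
have hPx : P *m x = 0.
  by rewrite /x -[P]trmxK -trmx_mul -row_mul hK row0 trmx0.
by have := hP x hx; rewrite -mulmxA hPx mulmx0 mxE ltxx.
Qed.

Lemma ct_inv m (P : 'M[C]_m) : ct (invmx P) = invmx (ct P).
Proof. by rewrite /ct (@map_invmx _ _ (Num.conj : {rmorphism C -> C})) trmx_inv. Qed.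

Lemma herm_inv m (P : 'M[C]_m) : Defs.hermitian P -> Defs.hermitian (invmx P).
Proof. by rewrite /Defs.hermitian ct_inv => ->. Qed.

Lemma posdef_inv m (P : 'M[C]_m) : posdef P -> posdef (invmx P).
Proof.
move=> hP; have hu := posdef_unit hP; case: hP => hH hP.
split; first exact: herm_inv.
move=> x hx; pose y := invmx P *m x.
have hy : y != 0.
  apply: contra hx => /eqP hy0; by rewrite -[x](mulKVmx hu) -/y hy0 mulmx0.
have := hP y hy; congr (0 < _ 0 0).
rewrite /y ct_mul (herm_inv hH) -!mulmxA; congr (_ *m _).
by rewrite mulKVmx.
Qed.

Lemma posdef_ge0 m (P : 'M[C]_m) (x : 'cV[C]_m) : posdef P -> 0 <= (ct x *m P *m x) 0 0.
Proof.
move=> [_ hP]; have [->|hx] := eqVneq x 0.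
  by rewrite mulmx0 mxE.
exact: ltW (hP x hx).
Qed.

Lemma posdef_eq0 m (P : 'M[C]_m) (x : 'cV[C]_m) : posdef P ->
  (ct x *m P *m x) 0 0 = 0 -> x = 0.
Proof.
move=> [_ hP] h; apply/eqP/negPn/negP => hx.
by have := hP x hx; rewrite h ltxx.
Qed.

End PD.
Section Real.
Variable R : realType.

Lemma real_key (A s W : R) : 0 < s -> 0 < W -> s ^+ 2 / W <= A ->
  1 - ln W <= A - 2 * ln s /\
  (A - 2 * ln s <= 1 - ln W -> A = 1 /\ s ^+ 2 = W).
Proof.
move=> s0 W0 yA.
have s20 : 0 < s ^+ 2 by rewrite exprn_gt0.
have y0 : 0 < s ^+ 2 / W by rewrite divr_gt0.
have lny : ln (s ^+ 2 / W) = 2 * ln s - ln W.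
  by rewrite ln_div ?posrE // lnXn // mulr2n mulrDl mul1r.
have key : 1 + ln (s ^+ 2 / W) <= s ^+ 2 / W.
  by have := expR_ge1Dx (ln (s ^+ 2 / W)); rewrite lnK ?posrE.
split; first lra.
move=> h.
have ly0 : ln (s ^+ 2 / W) = 0.
  apply/eqP/negPn/negP => hne.
  by have := expR_gt1Dx hne; rewrite lnK ?posrE // => h2; lra.
have y1 : s ^+ 2 / W = 1 by rewrite -[LHS]lnK ?posrE // ly0 expR0.
split; first lra.
by rewrite -[s ^+ 2](divfK (lt0r_neq0 W0)) y1 mul1r.
Qed.
End Real.
Section Expj.
Variable R : realType.
Local Notation C := R[i].

Lemma expj_conj (t : R) : expj t * (expj t)^* = 1.
Proof.
rewrite /expj /=; apply/eqP; rewrite eq_complex /=; apply/andP; split; apply/eqP.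
  by rewrite mulrN opprK -!expr2 cos2Dsin2.
by rewrite mulrN mulrC addNr.
Qed.

Lemma expj_surj (z : C) : z * z^* = 1 -> exists t : R, 0 <= t <= 2 * pi /\ expj t = z.
Proof.
case: z => p r /= /eqP; rewrite eq_complex /= => /andP [/eqP h _].
have h1 : p ^+ 2 + r ^+ 2 = 1 by rewrite !expr2; lra.
have hp : -1 <= p <= 1 by apply/andP; split; nra.
have [/andP [a0 api] ca] := acos_def hp.
have sa : sin (acos p) = `|r| by rewrite sin_acos // -h1 addrC addKr sqrtr_sqr.
have pi0 : 0 <= (pi : R) := pi_ge0 R.
have [r0|r0] := leP 0 r.
  exists (acos p); split; first by apply/andP; split => //; lra.
  by rewrite /expj ca sa ger0_norm.
exists (2 * pi - acos p); split; first by apply/andP; split; lra.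
rewrite /expj cosB sinB (_ : 2 * pi = pi *+ 2); last by rewrite mulr_natl.
rewrite cos2pi sin2pi ca sa ltr0_norm //.
by congr Complex; rewrite ?mul0r ?mul1r ?addr0 ?add0r ?opprK.
Qed.
End Expj.
Section Core.
Variable R : realType.
Local Notation C := R[i].
Variable m : nat.
Variables (P : 'M[C]_m) (qt : 'cV[C]_m).
Hypotheses (hP : posdef P) (hqt : qt != 0).

Local Notation hf a b := ((ct a *m P *m b) 0 0).
Local Notation x := (invmx P *m qt).
Local Notation w := ((ct qt *m invmx P *m qt) 0 0).
Local Notation toC r := ((r%:C)%C : C).

Lemma entryB p r (A B : 'M[C]_(p, r)) i j : (A - B) i j = A i j - B i j.
Proof. by rewrite !mxE. Qed.
Lemma entryZ p r s (A : 'M[C]_(p, r)) i j : (s *: A) i j = s * A i j.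
Proof. by rewrite !mxE. Qed.

Lemma hf_sub_l (a b c : 'cV[C]_m) : hf (a - b) c = hf a c - hf b c.
Proof. by rewrite ct_sub !mulmxBl entryB. Qed.
Lemma hf_sub_r (a b c : 'cV[C]_m) : hf a (b - c) = hf a b - hf a c.
Proof. by rewrite mulmxBr entryB. Qed.
Lemma hf_scale_l s (a c : 'cV[C]_m) : hf (s *: a) c = s^* * hf a c.
Proof. by rewrite ct_scale -!scalemxAl entryZ. Qed.
Lemma hf_scale_r s (a c : 'cV[C]_m) : hf a (s *: c) = s * hf a c.
Proof. by rewrite -scalemxAr entryZ. Qed.

Lemma Px : P *m x = qt.
Proof. by rewrite mulKVmx // posdef_unit. Qed.
Lemma xP : ct x *m P = ct qt.
Proof. by rewrite -{2}hP.1 -ct_mul Px. Qed.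
Lemma x_neq0 : x != 0.
Proof. by apply: contra hqt => /eqP h; rewrite -Px h mulmx0. Qed.
Lemma w_hf : w = hf x x.
Proof. by rewrite xP mulmxA. Qed.
Lemma w_gt0 : 0 < w.
Proof. by rewrite w_hf; exact: hP.2 _ x_neq0. Qed.
Lemma w_conj : w^* = w.
Proof. exact: conj_Creal (ger0_real (ltW w_gt0)). Qed.
Lemma hf_ux (u : 'cV[C]_m) : hf u x = (ct u *m qt) 0 0.
Proof. by rewrite -mulmxA Px. Qed.
Lemma hf_xu (u : 'cV[C]_m) : hf x u = ((ct u *m qt) 0 0)^*.
Proof. by rewrite xP -ct_entry ct_mul ctK. Qed.

Lemma quad (u : 'cV[C]_m) (c : C) : hf (u - c *: x) (u - c *: x) =
  hf u u - c * hf u x - c^* * hf x u + c^* * c * hf x x.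
Proof. rewrite hf_sub_l !hf_sub_r !hf_scale_l !hf_scale_r; ring. Qed.

Lemma CS (u : 'cV[C]_m) : let d := (ct u *m qt) 0 0 in
  0 <= hf u u - d * d^* / w /\
  (hf u u - d * d^* / w = 0 -> u = (d^* / w) *: x).
Proof.
move=> d.
have w0 : w != 0 := lt0r_neq0 w_gt0.
have e : hf (u - (d^* / w) *: x) (u - (d^* / w) *: x) = hf u u - d * d^* / w.
  rewrite quad hf_ux hf_xu -w_hf -/d.
  have -> : (d^* / w)^* = d / w.
    by rewrite rmorphM /= conjCK fmorphV /= w_conj.
  by field.
split; first by rewrite -e posdef_ge0.
by rewrite -e => /(posdef_eq0 hP) /eqP; rewrite subr_eq0 => /eqP.
Qed.

Lemma toC_norm (z : C) : `|z| = toC (complex.Re `|z|).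
Proof. by rewrite normc_def. Qed.
Lemma toC_ge0 (z : C) : 0 <= z -> z = toC (complex.Re z).
Proof. by move=> h; rewrite RRe_real // ger0_real. Qed.

Definition Fr (u : 'cV[C]_m) : R :=
  complex.Re (hf u u) - 2 * ln (complex.Re `|(ct u *m qt) 0 0|).

Lemma LB_CH (u : 'cV[C]_m) : (ct u *m qt) 0 0 != 0 ->
  1 - ln (complex.Re w) <= Fr u /\
  (Fr u <= 1 - ln (complex.Re w) ->
     exists t : R, 0 <= t <= 2 * pi /\ u = ((sqrtC w)^-1 * expj t) *: x).
Proof.
set d := (ct u *m qt) 0 0 => d0.
have [hge heq] := CS u; rewrite -/d in hge heq.
set A := complex.Re (hf u u); set s := complex.Re `|d|; set Wr := complex.Re w.
have ea : hf u u = toC A by rewrite /A -toC_ge0 // posdef_ge0.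
have ew : w = toC Wr by rewrite /Wr -toC_ge0 // ltW // w_gt0.
have edd : d * d^* = toC (s ^+ 2) by rewrite -normCK toC_norm -/s rmorphXn.
have s0 : 0 < s by rewrite -ltcR -toC_norm normr_gt0.
have W0 : 0 < Wr by rewrite -ltcR -ew w_gt0.
have hq : hf u u - d * d^* / w = toC (A - s ^+ 2 / Wr).
  by rewrite ea edd ew -rmorphV ?unitfE ?lt0r_neq0 // -rmorphM -rmorphB.
move: hge; rewrite hq ler0c subr_ge0 => hyA.
have [lb eq] := real_key s0 W0 hyA.
split; first exact: lb.
move=> /eq [A1 sW].
have := heq; rewrite hq A1 sW divff ?lt0r_neq0 // subrr => /(_ erefl) ->.
have sw0 : sqrtC w != 0 by rewrite sqrtC_eq0 lt0r_neq0 // w_gt0.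
have sreal : (sqrtC w)^* = sqrtC w.
  by apply: conj_Creal; apply: ger0_real; rewrite sqrtC_ge0 ltW // w_gt0.
have [t [ht et]] : exists t : R, 0 <= t <= 2 * pi /\ expj t = d^* / sqrtC w.
  apply: expj_surj; rewrite rmorphM /= fmorphV /= conjCK sreal.
  rewrite mulrACA -invfM -expr2 sqrtCK (mulrC d^*) edd sW -ew divff //.
  by rewrite lt0r_neq0 // w_gt0.
exists t; split => //; congr (_ *: _); rewrite et.
by rewrite mulrCA -invfM -expr2 sqrtCK.
Qed.

Lemma EQ (t : R) : let u := ((sqrtC w)^-1 * expj t) *: x in
  (ct u *m qt) 0 0 != 0 /\ Fr u = 1 - ln (complex.Re w).
Proof.
move=> u.
have w0 : w != 0 := lt0r_neq0 w_gt0.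
have sw0 : sqrtC w != 0 by rewrite sqrtC_eq0.
have sreal : (sqrtC w)^* = sqrtC w.
  by apply: conj_Creal; apply: ger0_real; rewrite sqrtC_ge0 ltW // w_gt0.
have ej := expj_conj t.
have hd : (ct u *m qt) 0 0 = ((sqrtC w)^-1 * expj t)^* * w.
  by rewrite -hf_ux /u hf_scale_l -w_hf.
have hbb : ((sqrtC w)^-1 * expj t)^* * ((sqrtC w)^-1 * expj t) = w^-1.
  rewrite rmorphM /= fmorphV /= sreal mulrACA -invfM -expr2 sqrtCK mulrC.
  by rewrite (mulrC (expj t)^*) ej mul1r.
have ha : hf u u = 1.
  by rewrite /u hf_scale_l hf_scale_r -w_hf mulrA hbb mulVf.
have hdd : (ct u *m qt) 0 0 * ((ct u *m qt) 0 0)^* = w.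
  move: hbb hd; set b := (sqrtC w)^-1 * expj t => hbb hd.
  rewrite hd [(b^* * w)^*]rmorphM /= conjCK w_conj.
  transitivity (b^* * b * (w * w)); first by ring.
  by rewrite hbb mulrA mulVf // mul1r.
set d := (ct u *m qt) 0 0 in hd hdd *.
have d0 : d != 0 by apply: contra w0 => /eqP d0; rewrite -hdd d0 mul0r.
split => //.
set s := complex.Re `|d|.
have s0 : 0 < s by rewrite -ltcR -toC_norm normr_gt0.
have sW : s ^+ 2 = complex.Re w.
  by rewrite -hdd -normCK toC_norm -rmorphXn.
rewrite /Fr ha -/d -/s -sW lnXn // mulr2n.
by rewrite /=; lra.
Qed.

End Core.
Section T2G.
Variable R : realType.
Local Notation C := R[i].
Variables (m : nat) (E : 'M[C]_(m.+1, m)) (ek : 'cV[C]_m.+1) (Wc : 'M[C]_m.+1)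
  (Ci : 'M[C]_m) (q : 'cV[C]_m).
Local Notation Cm := (E^T *m Wc *m E).
Local Notation g := (E^T *m Wc *m ek).
Hypotheses (hCp : Cm *m (Ci *m g) = g) (hpC : ct (Ci *m g) *m Cm = ct g)
  (hctg : ct g = ek^T *m Wc *m E).

Lemma entryB' p r (A B : 'M[C]_(p, r)) i j : (A - B) i j = A i j - B i j.
Proof. by rewrite !mxE. Qed.
Lemma trB' p r (A B : 'M[C]_(p, r)) : (A - B)^T = A^T - B^T.
Proof. by apply/matrixP => i j; rewrite !mxE. Qed.

Lemma shape5 (a b c d f : C) : a - b - (c - d) + (f - d) = f - c - (b - a).
Proof. ring. Qed.

Lemma T2_gen :
  (ct (q - Ci *m g) *m Cm *m (q - Ci *m g)) 0 0 +
  ((ek^T *m Wc *m ek) 0 0 - (ct g *m Ci *m g) 0 0) =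
  ((ek - E *m cj q)^T *m Wc *m (ek - E *m q)) 0 0.
Proof.
move: hCp hpC hctg; set p := Ci *m g; set G := g => Cp pC ctg.
rewrite ct_sub mulmxBl pC !mulmxBr !mulmxBl -(mulmxA (ct q) _ p) Cp !entryB'.
rewrite -(mulmxA (ct G)) -/p.
rewrite trB' trmx_mul !mulmxBl !entryB' ctg /G !mulmxA.
rewrite -[(cj q)^T]/(ct q).
exact: shape5.
Qed.
End T2G.

Section Main.
Variable R : realType.
Local Notation C := R[i].
Variable n : nat.
Variable k : 'I_n.+1.
Variable V : 'I_n.+1 -> 'M[C]_n.+1.
Hypothesis hV : forall m, posdef (V m).
Local Notation e := (@Defs.e R n).
Local Notation Ebar := (@Defs.Ebar R n).

Definition Ssum (q : 'cV[C]_n) : C := \sum_(j < n)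
  (ct (e (lift k j) + q j 0 *: e k) *m V (lift k j)
            *m (e (lift k j) + q j 0 *: e k)) 0 0.
Definition wq (q : 'cV[C]_n) : C := (ct (qtilde k q) *m invmx (V k) *m qtilde k q) 0 0.

Lemma qt_neq0 (q : 'cV[C]_n) : qtilde k q != 0.
Proof.
apply/negP=> /eqP /matrixP /(_ k 0); rewrite /qtilde entryB !mxE eqxx /=.
rewrite big1 => [|j _]; last by rewrite !mxE (negbTE (neq_lift k j)) mul0r.
by rewrite subr0 => /eqP; rewrite oner_eq0.
Qed.

Lemma ell2_Fr (u : 'cV[C]_n.+1) (q : 'cV[C]_n) : ell2 V k u q = complex.Re (Ssum q) + Fr (V k) (qtilde k q) u.
Proof. by rewrite /ell2 det_Tk /Fr raddfD addrA. Qed.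

Lemma feasE (u : 'cV[C]_n.+1) (q : 'cV[C]_n) : feasible k u q <-> (ct u *m qtilde k q) 0 0 != 0.
Proof. by rewrite /feasible det_Tk. Qed.

Lemma cj_entry p r (A : 'M[C]_(p, r)) i j : (cj A) i j = (A i j)^*.
Proof. by rewrite mxE. Qed.
Lemma cj_sub p r (A B : 'M[C]_(p, r)) : cj (A - B) = cj A - cj B.
Proof. by apply/matrixP => i j; rewrite !mxE rmorphB. Qed.
Lemma cj_ct p r (A : 'M[C]_(p, r)) : cj (ct A) = A^T.
Proof. by apply/matrixP => i j; rewrite !mxE conjCK. Qed.

Lemma trB p r (A B : 'M[C]_(p, r)) : (A - B)^T = A^T - B^T.
Proof. by apply/matrixP => i j; rewrite !mxE. Qed.

Lemma T2_eq (q : 'cV[C]_n) :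
  (ct (q - invmx (Cmx V k) *m gvec V k) *m Cmx V k *m (q - invmx (Cmx V k) *m gvec V k)) 0 0
   + zsc V k = (wq q)^*.
Proof.
have hPW := posdef_inv (hV k).
rewrite /zsc /Cmx /gvec /wq /qtilde.
move: (invmx (V k)) hPW => W hPW.
have hW : ct W = W by have [] := hPW.
have cjW : cj W = W^T by rewrite -{2}hW /ct trmxK.
have hC : ct ((Ebar k)^T *m cj W *m Ebar k) = (Ebar k)^T *m cj W *m Ebar k.
  by rewrite !ct_mul ct_tr cj_Ebar ct_cj ct_Ebar -cjW mulmxA.
have pdC : posdef ((Ebar k)^T *m cj W *m Ebar k).
  split => // x hx.
  have -> : (ct x *m ((Ebar k)^T *m cj W *m Ebar k) *m x) 0 0
          = (ct (Ebar k *m x) *m cj W *m (Ebar k *m x)) 0 0.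
    by rewrite ct_mul ct_Ebar !mulmxA.
  have hy : Ebar k *m x != 0.
    by apply: contra hx => /eqP h; rewrite -[x]mul1mx -(EbarTEbar _ k) -mulmxA h mulmx0.
  move: (Ebar k *m x) hy => y hy.
  have -> : (ct y *m cj W *m y) 0 0 = ((ct (cj y) *m W *m cj y) 0 0)^*.
    by rewrite -cj_entry !cj_mul cj_ct cjK.
  have hy' : cj y != 0.
    apply: contra hy => /eqP h; rewrite -[y]cjK h; apply/eqP/matrixP => i j.
    by rewrite !mxE conjC0.
  have hz := hPW.2 _ hy'.
  by rewrite conj_Creal // ger0_real // ltW.
have hCu := posdef_unit pdC.
move: hC hCu; set Cm := (Ebar k)^T *m cj W *m Ebar k => hC hCu.
have Cp : Cm *m (invmx Cm *m ((Ebar k)^T *m cj W *m e k)) = (Ebar k)^T *m cj W *m e k.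
  by rewrite mulKVmx.
have pC : ct (invmx Cm *m ((Ebar k)^T *m cj W *m e k)) *m Cm
          = ct ((Ebar k)^T *m cj W *m e k).
  by rewrite -{2}hC -ct_mul Cp.
have ctg : ct ((Ebar k)^T *m cj W *m e k) = (e k)^T *m cj W *m Ebar k.
  by rewrite !ct_mul ct_tr cj_Ebar ct_cj ct_e -cjW mulmxA.
rewrite -cj_entry !cj_mul cj_ct cj_sub cj_e cj_mul cj_Ebar cjK.
rewrite /Cm; move: (invmx Cm) Cp pC => Ci Cp pC.
exact: (T2_gen q Cp pC ctg).
Qed.
Lemma entryD p r (A B : 'M[C]_(p, r)) i j : (A + B) i j = A i j + B i j.
Proof. by rewrite !mxE. Qed.

Lemma quad_diag (v : 'cV[C]_n) (d : 'rV[C]_n) :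
  (ct v *m diag_mx d *m v) 0 0 = \sum_j (v j 0)^* * d 0 j * v j 0.
Proof.
rewrite [LHS]mxE; apply: eq_bigr => j _.
rewrite [X in X * _]mxE (bigD1 j) //= big1 ?addr0 => [|l /negbTE hl].
  by rewrite !mxE eqxx mulr1n.
by rewrite !mxE hl mulr0n mulr0.
Qed.

Lemma hf_add (P : 'M[C]_n.+1) (a c : 'cV[C]_n.+1) s :
  (ct (a + s *: c) *m P *m (a + s *: c)) 0 0 =
  (ct a *m P *m a) 0 0 + s * (ct a *m P *m c) 0 0 + s^* * (ct c *m P *m a) 0 0
  + s^* * s * (ct c *m P *m c) 0 0.
Proof.
rewrite ct_add ct_scale !mulmxDl !mulmxDr -!scalemxAl -!scalemxAr.
rewrite !entryD !entryZ; ring.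
Qed.

Lemma herm_entry (P : 'M[C]_n.+1) i j : ct P = P -> P i j = (P j i)^*.
Proof. by move=> h; rewrite -{1}h !mxE. Qed.

Lemma diag_pos (m : 'I_n.+1) i : 0 < V m i i.
Proof.
rewrite -quad_e; apply: (hV m).2.
apply/negP => /eqP /matrixP /(_ i 0); rewrite !mxE !eqxx /= => /eqP.
by rewrite oner_eq0.
Qed.

Definition Kc : C := \sum_(j < n)
  ((V (lift k j) k (lift k j))^* * V (lift k j) k (lift k j) / V (lift k j) k k
   - V (lift k j) (lift k j) (lift k j)).

Lemma T1_eq (q : 'cV[C]_n) :
  (ct (q + invmx (Amx V k) *m bvec V k) *m Amx V k *m (q + invmx (Amx V k) *m bvec V k)) 0 0
  = Ssum q + Kc.
Proof.
set y := \col_j (V (lift k j) k (lift k j) / V (lift k j) k k).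
have hA : Amx V k = diag_mx (\row_j V (lift k j) k k).
  congr diag_mx; apply/rowP => j; rewrite [LHS]mxE [RHS]mxE.
  by rewrite -ct_e quad_e.
have hAu : Amx V k \in unitmx.
  rewrite unitmxE hA det_diag unitfE; apply/prodf_neq0 => j _.
  by rewrite mxE lt0r_neq0 // diag_pos.
have hy : invmx (Amx V k) *m bvec V k = y.
  rewrite -[bvec V k](_ : Amx V k *m y = _) ?mulKmx //.
  rewrite hA mul_diag_mx; apply/matrixP => i j; rewrite ord1.
  rewrite [LHS]mxE [in LHS]mxE [y _ _]mxE [RHS]mxE.
  by rewrite -ct_e quad_e mulrC divfK // lt0r_neq0 // diag_pos.
rewrite hy hA quad_diag /Ssum /Kc -big_split /=; apply: eq_bigr => j _.
rewrite hf_add !quad_e !mxE.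
have a0 : V (lift k j) k k != 0 by rewrite lt0r_neq0 // diag_pos.
have ar : (V (lift k j) k k)^* = V (lift k j) k k.
  by apply: conj_Creal; apply: ger0_real; rewrite ltW // diag_pos.
rewrite [V (lift k j) (lift k j) k](herm_entry _ _ (hV _).1).
rewrite rmorphD /= rmorphM /= fmorphV /= ar.
by field.
Qed.
Lemma ReJ (z : C) : complex.Re z^* = complex.Re z.
Proof. by case: z. Qed.

Lemma fobj_eq : exists K : R, forall q,
  fobj V k q = complex.Re (Ssum q) - ln (complex.Re (wq q)) + K.
Proof.
exists (complex.Re Kc) => q.
rewrite /fobj /= T1_eq T2_eq ReJ raddfD /=.
by rewrite addrAC.
Qed.


Lemma part1 (q : 'cV[C]_n) (u : 'cV[C]_n.+1) :
     (feasible k u q /\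
      forall u', feasible k u' q -> ell2 V k u q <= ell2 V k u' q)
     <-> exists t : R, 0 <= t <= 2 * pi /\ u = ustar V k q t.
Proof.
have hq := qt_neq0 q.
split.
  move=> [/feasE hf hopt].
  have [_ ch] := LB_CH (hV k) hq hf.
  have [f0 e0] := EQ (hV k) hq 0.
  apply: ch.
  by have := hopt _ (proj2 (feasE _ _) f0); rewrite !ell2_Fr e0 lerD2l.
move=> [t [ht ->]].
have [f0 e0] := EQ (hV k) hq t.
split; first exact/feasE.
move=> u' /feasE hf'.
have [lb _] := LB_CH (hV k) hq hf'.
by rewrite !ell2_Fr /ustar e0 lerD2l.
Qed.

Lemma lin_a (a b c d f K : R) : 1 - c <= f -> a + f <= b + (1 - d) ->
  a - c + K <= b - d + K.
Proof. move=> *; lra. Qed.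
Lemma lin_b (a b c d f K : R) : 1 - d <= f -> a - c + K <= b - d + K ->
  a + (1 - c) <= b + f.
Proof. move=> *; lra. Qed.

Lemma part2 (q : 'cV[C]_n) :
     (exists u, feasible k u q /\
        forall u' q', feasible k u' q' -> ell2 V k u q <= ell2 V k u' q')
     <-> (forall q', fobj V k q <= fobj V k q').
Proof.
have [K hK] := fobj_eq.
split.
  move=> [u [/feasE hf hopt]] q'.
  have hq := qt_neq0 q; have hq' := qt_neq0 q'.
  have [lb _] := LB_CH (hV k) hq hf.
  have [f0 e0] := EQ (hV k) hq' 0.
  have := hopt _ q' (proj2 (feasE _ _) f0); rewrite !ell2_Fr e0 !hK /wq.
  exact: lin_a lb.
move=> hmin.
have hq := qt_neq0 q.
have [f0 e0] := EQ (hV k) hq 0.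
exists (ustar V k q 0); split; first exact/feasE.
move=> u' q' /feasE hf'.
have hq' := qt_neq0 q'.
have [lb _] := LB_CH (hV k) hq' hf'.
have := hmin q'; rewrite !hK /wq.
rewrite !ell2_Fr /ustar e0; exact: lin_b lb.
Qed.

End Main.

Theorem theorem1 (R : realType) (n : nat) (hn : (1 <= n)%N) (k : 'I_n.+1)
    (V : 'I_n.+1 -> 'M[R[i]]_n.+1) (hV : forall m, posdef (V m)) :
  (forall (q : 'cV[R[i]]_n) (u : 'cV[R[i]]_n.+1),
     (feasible k u q /\
      forall u', feasible k u' q -> ell2 V k u q <= ell2 V k u' q)
     <-> exists t : R, 0 <= t <= 2 * pi /\ u = ustar V k q t)
  /\
  (forall q : 'cV[R[i]]_n,
     (exists u, feasible k u q /\
        forall u' q', feasible k u' q' -> ell2 V k u q <= ell2 V k u' q')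
     <-> (forall q', fobj V k q <= fobj V k q')).
Proof.
split; [exact: part1 hV | exact: part2 hV].
Qed.
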